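(* Let $S=S(\lambda_1,\ldots,\lambda_d)$ be a spider with $n=1+\lambda_1+\cdots+\lambda_d$ vertices, and suppose $n=mq$ for positive integers $m,q$ with $m>1$. If $S$ has a connected partition of type $(m^q)$, then $$[e_{(m^q)}]X_S=m(m-1)^{q-1}.$$
   Context: A spider $S(\lambda_1,\ldots,\lambda_d)$, for positive integers $\lambda_1,\ldots,\lambda_d$, is the tree consisting of a vertex $v$ (the center) together with $d$ vertex-disjoint paths (legs) having $\lambda_1,\ldots,\lambda_d$ vertices respectively, where $v$ is joined by an edge to one endpoint of each leg. A connected partition of a graph $G=(V,E)$ is a partition of $V$ into blocks each inducing a connected subgraph; its type is the integer partition of $|V|$ formed by the block sizes; $(m^q)$ is the partition with $q$ parts equal to $m$. The chromatic symmetric function of $G$ is $X_G=\sum_\kappa \prod_{v} x_{\kappa(v)}$ over proper colorings $\kappa$, and $[e_\mu]X_G$ denotes the coefficient of $e_\mu$ in the expansion of $X_G$ in elementary symmetric functions. *)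

(* Defs.v *)
From HB Require Import structures.
From mathcomp Require Import all_boot all_order all_algebra.
From mathcomp Require Import mpoly.
Set Implicit Arguments. Unset Strict Implicit. Unset Printing Implicit Defensive.
Import Order.TTheory GRing.Theory Num.Theory.

(* Vertices of S(lam_0,...,lam_{d-1}): None = center; Some (j, k) = the k-th
   vertex (0-based, k < lam j) of leg j, vertex k = 0 being joined to the center. *)
Definition spider_vert (d : nat) (lam : 'I_d -> nat) : finType :=
  option {j : 'I_d & 'I_(lam j)}.

Definition spider_adj0 (d : nat) (lam : 'I_d -> nat)
    (x y : spider_vert lam) : bool :=
  match x, y with
  | None, Some (existT _ k) => val k == 0
  | Some (existT j k), Some (existT j' k') => (j == j') && (val k' == (val k).+1)
  | _, _ => false
  end.

Definition spider_adj (d : nat) (lam : 'I_d -> nat) : rel (spider_vert lam) :=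
  fun x y => spider_adj0 x y || spider_adj0 y x.

Definition induces_connected (V : finType) (adj : rel V) (B : {set V}) : bool :=
  [forall x in B, forall y in B,
     connect [rel u v | [&& adj u v, u \in B & v \in B]] x y].

Definition connected_partition_of_type_mq (V : finType) (adj : rel V)
    (m q : nat) (P : {set {set V}}) : Prop :=
  [/\ partition P [set: V],
      (forall B, B \in P -> induces_connected adj B),
      (forall B, B \in P -> #|B| = m) &
      #|P| = q].

(* X_G in N = |V| variables x_0..x_{N-1}; with N >= |V| this truncation is
   injective on homogeneous symmetric functions of degree |V|, so all
   e-coefficients are determined by it. *)
Definition proper_coloring (V : finType) (adj : rel V) (N : nat)
    (k : {ffun V -> 'I_N}) : bool :=
  [forall x, forall y, adj x y ==> (k x != k y)].

Definition chrom_sym (V : finType) (adj : rel V) : {mpoly int[#|V|]} :=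
  \sum_(k : {ffun V -> 'I_#|V|} | proper_coloring adj k) \prod_(v : V) 'X_(k v).

(* An integer partition of n is encoded as a nonincreasing n-tuple of parts
   (parts in 0..n), padded with zeros, whose parts sum to n. *)
Definition is_ipart (n : nat) (mu : {ffun 'I_n -> 'I_n.+1}) : bool :=
  [forall i : 'I_n, forall j : 'I_n, (i <= j)%N ==> (mu j <= mu i)%N]
  && (\sum_(i < n) (mu i : nat) == n)%N.

Definition e_basis (n : nat) (mu : {ffun 'I_n -> 'I_n.+1}) : {mpoly int[n]} :=
  \prod_(i < n) mesym n int (mu i).

Definition part_mq (n m q : nat) : {ffun 'I_n -> 'I_n.+1} :=
  [ffun i : 'I_n => if (i < q)%N then inord m else ord0].

Definition e_coeff_is (n : nat) (X : {mpoly int[n]})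
    (mu : {ffun 'I_n -> 'I_n.+1}) (c : int) : Prop :=
  (exists a : {ffun 'I_n -> 'I_n.+1} -> int,
      X = (\sum_(nu | is_ipart nu) a nu *: e_basis nu)%R) /\
  (forall a : {ffun 'I_n -> 'I_n.+1} -> int,
      X = (\sum_(nu | is_ipart nu) a nu *: e_basis nu)%R -> a mu = c).

(* Main.v *)
Require Import Defs.
From HB Require Import structures.
From mathcomp Require Import all_boot all_order all_algebra.
From mathcomp Require Import mpoly.
From mathcomp Require Import zify.
From mathcomp Require Import algC cyclotomic.
From mathcomp Require Import ring.
From mathcomp Require Import fingroup perm.
Import Order.TTheory GRing.Theory Num.Theory.
Set Implicit Arguments. Unset Strict Implicit. Unset Printing Implicit Defensive.
Lemma card_ord_ge L k : #|[pred i : 'I_L | (k <= i)%N]| = L - k.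
Proof.
rewrite -sum1_card big_mkcond /=.
elim: L => [|L IH]; first by rewrite big_ord0.
rewrite big_ord_recr /= IH inE /=; case: ifP; lia.
Qed.

Lemma card_ord_lt L k : #|[pred i : 'I_L | (i < k)%N]| = minn k L.
Proof.
rewrite -sum1_card big_mkcond /=.
elim: L => [|L IH]; first by rewrite big_ord0 minn0.
rewrite big_ord_recr /= IH inE /=; case: ifP; lia.
Qed.

Section Spider.
Variables (d : nat) (lam : 'I_d -> nat).
Local Notation V := (spider_vert lam).

Definition spar (v : V) : V :=
  match v with
  | None => None
  | Some (existT j k) => if val k == 0 then None
      else Some (existT _ j (Ordinal (leq_ltn_trans (leq_pred k) (ltn_ord k))))
  end.

Definition sdep (v : V) : nat :=
  match v with None => 0 | Some (existT _ k) => (val k).+1 end.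

Lemma sdep_par v : v != None -> sdep (spar v) < sdep v.
Proof.
case: v => [[j k]|] //= _; case: ifP => /= [_|/eqP Hk]; lia.
Qed.

Lemma sdep0 v : (sdep v == 0) = (v == None).
Proof. by case: v => [[j k]|]. Qed.

Lemma adj0_par x y : spider_adj0 x y = (y != None) && (spar y == x).
Proof.
case: x => [[j k]|]; case: y => [[j' k']|] /=; try by [].
- case: ifP => [/eqP -> //|/eqP Hk].
    by rewrite andbF.
  apply/idP/idP.
  + move=> /andP[/eqP Ej /eqP Ek]; subst j'.
    apply/eqP; congr (Some (existT _ _ _)); apply/val_inj => /=; lia.
  + move/eqP => H.
    have Hj : j' = j by have := congr1 (fun v => if v is Some t then tag t else j) H.
    have Hd := congr1 sdep H; simpl in Hd.
    subst j'; rewrite eqxx /=; apply/eqP; lia.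
- by case: ifP.
Qed.

Lemma adj_par x y : spider_adj x y =
  ((y != None) && (spar y == x)) || ((x != None) && (spar x == y)).
Proof. by rewrite /spider_adj !adj0_par. Qed.

Lemma proper_par (N : nat) (k : {ffun V -> 'I_N}) :
  proper_coloring (@spider_adj d lam) k = [forall v, (v != None) ==> (k v != k (spar v))].
Proof.
apply/forallP/forallP => H.
- move=> v; apply/implyP => Hv.
  have := H (spar v); move/forallP/(_ v)/implyP; rewrite adj_par Hv eqxx /=.
  by move=> /(_ isT); rewrite eq_sym.
- move=> x; apply/forallP => y; apply/implyP; rewrite adj_par.
  case/orP => /andP[Hy /eqP <-].
  + by have := H y; rewrite Hy /= eq_sym.
  + by have := H x; rewrite Hy /=.
Qed.

End Spider.

Section Spider2.
Variables (d : nat) (lam : 'I_d -> nat).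
Local Notation V := (spider_vert lam).

Lemma big_V (R : Type) (idx : R) (op : Monoid.com_law idx) (F : V -> R) :
  \big[op/idx]_(v : V) F v =
  op (F None) (\big[op/idx]_(j < d) \big[op/idx]_(k < lam j) F (Some (existT _ j k))).
Proof.
have -> : \big[op/idx]_(v : V) F v =
   \big[op/idx]_(v <- None :: map Some (enum {: {j : 'I_d & 'I_(lam j)}})) F v.
  rewrite [RHS]big_uniq /=; last first.
    rewrite map_inj_uniq ?enum_uniq ?andbT; last by move=> a b [].
    by apply/mapP => -[].
  apply: eq_bigl => v; case: v => [t|] //=; rewrite inE /=.
  by rewrite (mem_map (fun a b (H : Some a = Some b) => ltac:(case: H => //))) mem_enum.
rewrite big_cons big_map big_enum /=; congr (op _ _).
rewrite (@sig_big_dep R idx op 'I_d (fun j => 'I_(lam j)) xpredT (fun j => xpredT)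
   (fun j (k : 'I_(lam j)) => F (Some (existT _ j k)))) /=.
apply: eq_big => // p _; by case: p.

Qed.

Lemma sigeq j j' (a : 'I_(lam j)) (b : 'I_(lam j')) :
  (Some (existT _ j a) == Some (existT _ j' b) :> V) = (j == j') && (val a == val b).
Proof.
apply/eqP/andP => [H|[/eqP Ej /eqP Eab]].
- have Hj : j = j' by have := congr1 (fun v : V => if v is Some t then tag t else j) H.
  have Hd := congr1 (@sdep d lam) H; simpl in Hd.
  by split; apply/eqP => //; case: Hd.
- subst j'; congr (Some (existT _ _ _)); exact/val_inj.
Qed.

Definition anc (u v : V) : bool :=
  match u, v with
  | None, _ => true
  | Some (existT j k), Some (existT j' k') => (j == j') && (val k <= val k')
  | _, None => false
  end.

Lemma ancN v : anc None v = true. Proof. by []. Qed.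

Lemma anc_refl v : anc v v.
Proof. by case: v => [[j k]|] //=; rewrite eqxx leqnn. Qed.

Lemma anc_dep u v : anc u v -> sdep u <= sdep v.
Proof. by case: u => [[j k]|]; case: v => [[j' k']|] //= /andP[_ H]. Qed.

Lemma anc_par u v : v != None -> anc u v = (u == v) || anc u (spar v).
Proof.
case: v => [[j' k']|] // _; case: u => [[j k]|]; last by rewrite !ancN orbT.
rewrite /=.
rewrite sigeq; case: ifP => [/eqP Hk|/eqP Hk] /=.
- rewrite Hk orbF; case: (j == j') => //=; lia.
- case: (j == j') => //=; lia.
Qed.

Definition ssize (v : V) : nat :=
  if v is Some (existT j k) then lam j - val k else #|V|.

Lemma card_V : #|V| = (1 + \sum_(j < d) lam j)%N.
Proof.
rewrite -sum1_card (big_V (Monoid.Law.clone _ _ addn _) (fun v => 1%N)) /=.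
congr (_ + _)%N; apply: eq_bigr => j _.
by rewrite sum1_card card_ord.
Qed.

Lemma card_anc u : #|[pred v | anc u v]| = ssize u.
Proof.
case: u => [[j k]|] /=; last by apply: eq_card.
rewrite -sum1_card big_mkcond /= (big_V (Monoid.Law.clone _ _ addn _)) /= add0n.
rewrite (bigD1 j) //= [X in (_ + X)%N]big1 ?addn0; last first.
  move=> i /negbTE Hi; apply: big1 => k' _; by rewrite inE /= eq_sym Hi.
under eq_bigr do rewrite inE /= eqxx /=.
have -> : forall L (k0 : nat), (\sum_(k' < L) (if k0 <= k' then 1 else 0) = L - k0)%N.
  move=> L k0; elim: L => [|L IH]; first by rewrite big_ord0.
  rewrite big_ord_recr /= IH; case: ifP; lia.
by [].
Qed.

End Spider2.

Local Open Scope ring_scope.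
Section Color.
Variables (d : nat) (lam : 'I_d -> nat).
Local Notation V := (spider_vert lam).
Variables (p : nat) (z : algC).
Hypothesis Hz : ((p.+1).-primitive_root z)%R.

Definition gz (c : 'I_p.+1) : algC := z ^+ c.

Lemma gzD a b : gz (a + b) = gz a * gz b.
Proof. by rewrite /gz /= prim_expr_mod // exprD. Qed.

Lemma gz_neq0 a : gz a != 0.
Proof. by rewrite /gz expf_neq0 // (prim_root_eq0 Hz). Qed.

Lemma gzB a b : gz (a - b) = gz a / gz b.
Proof.
apply: (mulIf (gz_neq0 b)); rewrite -gzD subrK divfK //; exact: gz_neq0.
Qed.

Definition Phi (k : {ffun V -> 'I_p.+1}) : {ffun V -> 'I_p.+1} :=
  [ffun v => if v == None then k v else k v - k (spar v)].

Lemma Phi_rec (k : {ffun V -> 'I_p.+1}) (v : V) : v != None -> k v = Phi k v + k (spar v).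
Proof. by move=> Hv; rewrite ffunE (negbTE Hv) subrK. Qed.

Lemma Phi_inj : injective Phi.
Proof.
move=> k1 k2 E; apply/ffunP.
suff H : forall n v, (sdep v <= n)%N -> k1 v = k2 v by move=> v; exact: (H _ v (leqnn _)).
elim => [|n IH] v Hv.
- have : v == None by rewrite -sdep0; lia.
  move/eqP => ->; have := congr1 (fun f : {ffun V -> 'I_p.+1} => f None) E; by rewrite !ffunE.
- case: (eqVneq v None) => [->|Hn].
    have := congr1 (fun f : {ffun V -> 'I_p.+1} => f None) E; by rewrite !ffunE.
  rewrite (Phi_rec k1 Hn) (Phi_rec k2 Hn) E IH //.
  have := sdep_par Hn; lia.
Qed.

Lemma kappa_anc (k : {ffun V -> 'I_p.+1}) (v : V) : gz (k v) = \prod_(u | anc u v) gz (Phi k u).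
Proof.
move: {2}(sdep v) (leqnn (sdep v)) => n; elim: n v => [|n IH] v Hv.
- have /eqP -> : v == None by rewrite -sdep0; lia.
  rewrite (big_pred1 None) ?ffunE //= => u; case: u => [[j k']|] //.
- case: (eqVneq v None) => [->|Hn].
    rewrite (big_pred1 None) ?ffunE //= => u; case: u => [[j k']|] //.
  rewrite (Phi_rec k Hn) gzD (IH (spar v)); last by have := sdep_par Hn; lia.
  rewrite [RHS](bigD1 v) /=; last exact: anc_refl.
  congr (_ * _); apply: eq_bigl => u.
  rewrite (anc_par _ Hn); case: (eqVneq u v) => [->|] //=.
  - apply/negbTE; apply/negP => /anc_dep; have := sdep_par Hn; lia.
  - by rewrite andbT.
Qed.

Lemma prod_kappa (k : {ffun V -> 'I_p.+1}) : \prod_v gz (k v) = \prod_u gz (Phi k u) ^+ ssize u.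
Proof.
under eq_bigr do rewrite kappa_anc.
rewrite (exchange_big_dep xpredT) //=.
apply: eq_bigr => u _; rewrite prodr_const; congr (_ ^+ _).
by rewrite -card_anc.
Qed.

Lemma sum_col :
  \sum_(k : {ffun V -> 'I_p.+1} | proper_coloring (@spider_adj d lam) k) \prod_v gz (k v)
  = \prod_(u : V) (\sum_(c | (u == None) || (c != 0)) gz c ^+ ssize u).
Proof.
rewrite bigA_distr_big_dep /=.
rewrite [RHS](reindex_inj Phi_inj) /=.
apply: eq_big => k.
- rewrite proper_par; apply/forallP/familyP => H v; have := H v.
  + rewrite unfold_in /= ffunE; case: (eqVneq v None) => [->|Hv] //=.
    by rewrite subr_eq0.
  + rewrite unfold_in /= ffunE; case: (eqVneq v None) => [->|Hv] //=.
    by rewrite subr_eq0.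
- move=> _; exact: prod_kappa.
Qed.

End Color.

Local Open Scope ring_scope.
Section Eval.
Variables (p : nat) (z : algC).
Hypothesis Hz : ((p.+1).-primitive_root z)%R.

Lemma sum_pow (s : nat) :
  \sum_(c : 'I_p.+1) gz z c ^+ s = if (p.+1 %| s)%N then (p.+1)%:R else 0.
Proof.
under eq_bigr do rewrite /gz -exprM mulnC exprM.
have Hw : (z ^+ s) ^+ p.+1 = 1 by rewrite -exprM mulnC exprM (prim_expr_order Hz) expr1n.
case: ifP => Hs.
- move: Hs; rewrite (prim_order_dvd Hz) => /eqP ->.
  by under eq_bigr do rewrite expr1n; rewrite sumr_const card_ord.
- have Hne : z ^+ s - 1 != 0 by rewrite subr_eq0 -(prim_order_dvd Hz) Hs.
  apply: (mulfI Hne); rewrite mulr0 -subrX1 Hw subrr //.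
Qed.

Lemma sum_pow_nz (s : nat) :
  \sum_(c : 'I_p.+1 | c != 0) gz z c ^+ s = if (p.+1 %| s)%N then p%:R else -1.
Proof.
have := sum_pow s; rewrite (bigD1 0) //= {1}/gz /= expr0 expr1n => H.
apply: (addrI 1); rewrite H; case: ifP => _; last by rewrite subrr.
by rewrite -natr1 addrC.
Qed.

End Eval.

Definition fdiv (p s : nat) : algC := if (p.+1 %| s)%N then p%:R else -1.

Lemma prod_fdiv p L :
  \prod_(k < L) fdiv p (L - k) = (p%:R) ^+ (L %/ p.+1) * (-1) ^+ (L - L %/ p.+1).
Proof.
rewrite (reindex_inj rev_ord_inj) /=.
have -> : \prod_(k < L) fdiv p (L - rev_ord k) = \prod_(k < L) fdiv p k.+1.
  apply: eq_bigr => k _; congr fdiv; rewrite /=; have := ltn_ord k; lia.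
elim: L => [|L IH]; first by rewrite big_ord0 div0n expr0 mulr1.
rewrite big_ord_recr /= IH (divnS _ (ltn0Sn p)) /fdiv.
have HL : (L %/ p.+1 <= L)%N by apply: leq_div.
case: ifP => /= H.
- by rewrite add1n subSS exprS mulrC mulrA.
- rewrite add0n -mulrA -exprSr; congr (_ * _ ^+ _); lia.
Qed.

Section Eval2.
Variables (d : nat) (lam : 'I_d -> nat).
Local Notation V := (spider_vert lam).
Variables (p : nat) (z : algC).
Hypothesis Hz : ((p.+1).-primitive_root z)%R.

Lemma prod_eval : (p.+1 %| #|V|)%N ->
  \prod_(u : V) (\sum_(c : 'I_p.+1 | (u == None) || (c != 0)) gz z c ^+ ssize u)
  = (p.+1)%:R * (p%:R) ^+ (\sum_(j < d) (lam j %/ p.+1))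
       * (-1) ^+ (\sum_(j < d) (lam j - lam j %/ p.+1)).
Proof.
move=> Hdiv.
rewrite (big_V (Monoid.ComLaw.clone _ _ *%R _)) /=.
rewrite sum_pow // Hdiv -mulrA; congr (_ * _).
rewrite -!prodrXr -big_split /=; apply: eq_bigr => j _.
rewrite -prod_fdiv; apply: eq_bigr => k _.
by rewrite sum_pow_nz.
Qed.

End Eval2.

Local Open Scope ring_scope.
Section Widen.
Variables (d : nat) (lam : 'I_d -> nat).
Local Notation V := (spider_vert lam).
Variables (N p : nat) (z : algC).
Hypothesis HpN : (p.+1 <= N)%N.

Definition xpt (i : 'I_N) : algC := if (i < p.+1)%N then - z ^+ i else 0.

Definition wid (k : {ffun V -> 'I_p.+1}) : {ffun V -> 'I_N} :=
  [ffun v => widen_ord HpN (k v)].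
Definition unwid (k : {ffun V -> 'I_N}) : {ffun V -> 'I_p.+1} :=
  [ffun v => inord (k v)].

Lemma sum_widen :
  \sum_(k : {ffun V -> 'I_N} | proper_coloring (@spider_adj d lam) k) \prod_v xpt (k v)
  = \sum_(k : {ffun V -> 'I_p.+1} | proper_coloring (@spider_adj d lam) k)
       \prod_v (- gz z (k v)).
Proof.
pose small (k : {ffun V -> 'I_N}) := [forall v, (k v < p.+1)%N].
rewrite (bigID small) /= [X in _ + X]big1 ?addr0; last first.
  move=> k /andP[_ /forallPn [v Hv]]; rewrite (bigD1 v) //= /xpt.
  by rewrite (negbTE Hv) mul0r.
rewrite (reindex wid) /=; last first.
  exists unwid => k.
  - rewrite inE => _; apply/ffunP => v; rewrite !ffunE; apply/val_inj => /=.
    by rewrite inordK.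
  - rewrite inE => /andP[_ /forallP Hs]; apply/ffunP => v; rewrite !ffunE.
    apply/val_inj => /=; rewrite inordK //; exact: Hs.
apply: eq_big => k.
- have -> : small (wid k) by apply/forallP => v; rewrite ffunE /=.
  rewrite andbT; apply/forallP/forallP => H x; apply/forallP => y;
    have := H x => /forallP /(_ y); by rewrite !ffunE.
- move=> _; apply: eq_bigr => v _; by rewrite ffunE /xpt /= ltn_ord.
Qed.

End Widen.

Section Psi.
Variables (N p : nat) (z : algC).
Hypothesis Hz : ((p.+1).-primitive_root z)%R.
Hypothesis HpN : (p.+1 <= N)%N.
Local Notation x := (@xpt N p z).

Definition psi (P : {mpoly int[N]}) : algC := mmap intr x P.

Lemma psi_X i : psi 'X_i = x i.
Proof. by rewrite /psi mmapX mmap1U. Qed.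

Lemma psi_mesym1 h : psi 'X_[mesym1 h] = \prod_(i in h) x i.
Proof.
rewrite /psi mmapX /mmap1 [RHS]big_mkcond /=; apply: eq_bigr => i _.
by rewrite mnmE; case: (i \in h).
Qed.

Lemma psi_mesym k : psi (mesym N int k) = \sum_(h : {set 'I_N} | #|h| == k) \prod_(i in h) x i.
Proof.
rewrite mesymE /psi rmorph_sum /=; apply: eq_bigr => h _; exact: psi_mesym1.
Qed.

Lemma vieta : \prod_(i < N) ('X + (x i)%:P) =
  \sum_(h : {set 'I_N}) (\prod_(i in h) x i) *: 'X^(N - #|h|).
Proof.
under eq_bigr do rewrite addrC.
rewrite [LHS](@bigA_distr {poly algC} 0 1 *%R +%R) /=.
apply: eq_bigr => h _.
rewrite (bigID (fun i => i \in h)) /=.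
rewrite (eq_bigr (fun i => (x i)%:P)); last by move=> i ->.
rewrite [X in _ * X](eq_bigr (fun i => 'X)); last by move=> i /negbTE ->.
rewrite prodr_const -rmorph_prod mul_polyC; congr (_ *: 'X^_).
have HC : (#|h| + #|~: h| = N)%N by rewrite cardsC card_ord.
have -> : (N - #|h| = #|~: h|)%N by lia.
apply: eq_card => i; by rewrite !inE.
Qed.
Lemma prodX : \prod_(i < N) ('X + (x i)%:P) = ('X^(p.+1) - 1) * 'X^(N - p.+1).
Proof.
rewrite (bigID (fun i : 'I_N => (i < p.+1)%N)) /=; congr (_ * _).
- rewrite (eq_bigr (fun i : 'I_N => 'X - (z ^+ i)%:P)); last first.
    by move=> i Hi; rewrite /xpt Hi polyCN.
  rewrite -(big_ord_widen _ (fun i => 'X - (z ^+ i)%:P) HpN).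
  by rewrite -(factor_Xn_sub_1 Hz) big_mkord.
- rewrite (eq_bigr (fun i => 'X)); last first.
    by move=> i /negbTE Hi; rewrite /xpt Hi addr0.
  rewrite prodr_const -(card_ord_ge N p.+1); congr ('X ^+ _).
  apply: eq_card => i; rewrite !inE /=; lia.
Qed.

Lemma psi_mesymE k : (k <= N)%N ->
  psi (mesym N int k) = if k == 0%N then 1 else if k == p.+1 then -1 else 0.
Proof.
move=> HkN.
have := congr1 (fun P : {poly algC} => P`_(N - k)) (etrans (esym prodX) vieta).
rewrite /= coef_sum mulrBl mul1r -exprD coefB !coefXn subnKC //.
under eq_bigr do rewrite coefZ coefXn.
under eq_bigr do rewrite mulr_natr mulrb.
rewrite -big_mkcond /= => H.
rewrite psi_mesym.
have -> : \sum_(h : {set 'I_N} | #|h| == k) \prod_(i in h) x i =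
          \sum_(h : {set 'I_N} | (N - k)%N == (N - #|h|)%N) \prod_(i in h) x i.
  apply: eq_bigl => h; have Hh : (#|h| <= N)%N by have := max_card h; rewrite card_ord.
  apply/eqP/eqP; lia.
rewrite -H; case: (eqVneq k 0%N) => [->|Hk0].
  rewrite subn0 eqxx.
  have -> : (N == (N - p.+1)%N) = false by apply/negbTE/eqP; lia.
  by rewrite subr0.
have -> : ((N - k)%N == N) = false by apply/negbTE; apply/eqP; lia.
case: (eqVneq k p.+1) => [->|Hkp]; first by rewrite eqxx sub0r.
have -> : ((N - k)%N == (N - p.+1)%N) = false by apply/negbTE; apply/eqP; lia.
by rewrite subrr.
Qed.
End Psi.

Section IPart.
Variables (N m q : nat).
Hypotheses (Hm : (0 < m)%N) (Hq : (0 < q)%N) (HN : N = (m * q)%N).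

Lemma part_mq_val (i : 'I_N) : nat_of_ord (part_mq N m q i) = if (i < q)%N then m else 0%N.
Proof. rewrite ffunE; case: ifP => // _; rewrite /= inordK //; nia. Qed.

Lemma ipart_mq : is_ipart (part_mq N m q).
Proof.
apply/andP; split.
- apply/forallP => i; apply/forallP => j; apply/implyP => Hij.
  rewrite !part_mq_val; case: ifP; case: ifP => //; lia.
- under eq_bigr do rewrite part_mq_val.
  have Hqn : (q <= N)%N by nia.
  rewrite -big_mkcond /= sum_nat_const card_ord_lt (minn_idPl Hqn) HN mulnC eqxx.
  done.
Qed.

Lemma ipart_01 (nu : {ffun 'I_N -> 'I_N.+1}) : is_ipart nu ->
  (forall i, ((nu i : nat) == 0%N) || ((nu i : nat) == m)) -> nu = part_mq N m q.
Proof.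
move=> /andP[/forallP Hmon /eqP Hsum] H01.
have Hmon' : forall i j : 'I_N, (i <= j)%N -> (nu j <= nu i)%N.
  by move=> i j Hij; have := Hmon i => /forallP /(_ j) /implyP /(_ Hij).
pose A := [pred i : 'I_N | (nu i : nat) == m].
have HA : #|A| = q.
  have : (\sum_(i < N) (nu i : nat) = \sum_(i in A) m)%N.
    rewrite [RHS]big_mkcond /=; apply: eq_bigr => i _; rewrite inE.
    by case/orP: (H01 i) => /eqP ->; [rewrite eq_sym (gtn_eqF Hm)|rewrite eqxx].
  rewrite Hsum sum_nat_const => E.
  have : (#|A| * m = q * m)%N by rewrite -E HN mulnC.
  by move/eqP; rewrite eqn_mul2r; case/orP => [/eqP|/eqP]; lia.
apply/ffunP => i; apply/val_inj => /=; rewrite part_mq_val.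
case/orP: (H01 i) => /eqP Hi; rewrite Hi.
- case: ifP => // Hiq.
  have : (#|A| <= minn i N)%N.
    rewrite -card_ord_lt; apply: subset_leq_card; apply/subsetP => j.
    rewrite !inE /= => /eqP Hj; rewrite ltnNge; apply/negP => Hij.
    have := Hmon' _ _ Hij; lia.
  lia.
- case: ifP => // Hiq.
  have : (minn i.+1 N <= #|A|)%N.
    rewrite -card_ord_lt; apply: subset_leq_card; apply/subsetP => j.
    rewrite !inE /= => Hj.
    have := Hmon' j i ltac:(lia); case/orP: (H01 j) => /eqP -> //; lia.
  have := ltn_ord i; lia.
Qed.
End IPart.

Section Part.
Variables (d : nat) (lam : 'I_d -> nat).
Local Notation V := (spider_vert lam).

Definition legof (v : V) : option 'I_d := if v is Some t then Some (tag t) else None.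

Lemma legof_par v : spar v != None -> legof (spar v) = legof v.
Proof. case: v => [[j k]|] //=; case: ifP => //. Qed.

Lemma adj_leg u v : spider_adj u v -> u != None -> v != None -> legof u = legof v.
Proof.
rewrite adj_par => /orP[/andP[_ /eqP <-]|/andP[_ /eqP <-]] Hu Hv.
- by rewrite legof_par.
- by rewrite legof_par.
Qed.

Definition leg (j : 'I_d) : {set V} := [set v | legof v == Some j].

Lemma card_leg j : #|leg j| = lam j.
Proof.
rewrite -sum1_card big_mkcond /= (big_V (Monoid.Law.clone _ _ addn _)) /= inE /= add0n.
rewrite (bigD1 j) //= [X in (_ + X)%N]big1 ?addn0; last first.
  move=> i /negbTE Hi; apply: big1 => k' _; by rewrite inE /= (inj_eq Some_inj) Hi.
under eq_bigr do rewrite inE /= eqxx.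
by rewrite sum_nat_const card_ord muln1.
Qed.

Lemma block_in_leg (P : {set {set V}}) m q B :
  connected_partition_of_type_mq (@spider_adj d lam) m q P -> (0 < m)%N ->
  B \in P -> None \notin B -> exists j, B \subset leg j.
Proof.
case=> Hpart Hconn Hcard _ Hm HB HN.
have : (0 < #|B|)%N by rewrite Hcard.
case/card_gt0P => x0 Hx0.
case Ex0 : x0 => [t0|]; last by rewrite -Ex0 Hx0 in HN.
exists (tag t0); apply/subsetP => y Hy.
have := Hconn B HB => /forallP /(_ x0) /implyP /(_ Hx0) /forallP /(_ y) /implyP /(_ Hy).
have Hcl : closed [rel u v | [&& spider_adj u v, u \in B & v \in B]] (leg (tag t0)).
  move=> u v /= /and3P[Huv Hu Hv]; rewrite !inE (adj_leg Huv) //.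
  - by apply: contraNneq HN => <-.
  - by apply: contraNneq HN => <-.
move/(closed_connect Hcl) <-; by rewrite Ex0 inE.
Qed.

Lemma legs_div (P : {set {set V}}) m q :
  connected_partition_of_type_mq (@spider_adj d lam) m q P -> (0 < m)%N ->
  (1 + \sum_(j < d) lam j = m * q)%N ->
  (\sum_(j < d) (lam j %/ m) = q - 1)%N.
Proof.
move=> HP Hm Hn.
case: (HP) => Hpart Hconn Hcard HPq.
have Hup : (m * \sum_(j < d) (lam j %/ m) <= \sum_(j < d) lam j)%N.
  rewrite big_distrr /=; apply: leq_sum => j _; rewrite mulnC; exact: leq_trunc_div.
pose B0 := pblock P None.
have HB0 : B0 \in P by apply: pblock_mem; rewrite (cover_partition Hpart) inE.
have HtP : trivIset P by case/and3P: Hpart.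
pose Q j := [set B in P | B \subset leg j].
have HQ : forall j, (#|Q j| * m <= lam j)%N.
  move=> j; rewrite -card_leg.
  have Hpq : partition (Q j) (cover (Q j)).
    apply/and3P; split => //.
    - apply: trivIsetS HtP; apply/subsetP => B; by rewrite inE => /andP[].
    - apply/negP; rewrite inE => /andP[/Hcard]; rewrite cards0 => E; lia.
  rewrite -(card_uniform_partition _ Hpq); last first.
    by move=> B; rewrite inE => /andP[/Hcard].
  apply: subset_leq_card; apply/bigcupsP => B; rewrite inE => /andP[].
  done.
have Hlow : (q - 1 <= \sum_(j < d) #|Q j|)%N.
  have -> : (q - 1 = #|P :\ B0|)%N.
    by rewrite -HPq (cardsD1 B0 P) HB0 /= addKn.
  rewrite -sum1_card.
  apply: (@leq_trans (\sum_(B in P :\ B0) \sum_(j < d) (B \subset leg j))).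
    apply: leq_sum => B; rewrite !inE => /andP[HBn HBP].
    have HN : None \notin B.
      apply/negP => HNB; move/negP: HBn; apply; apply/eqP.
      by rewrite /B0 (def_pblock HtP HBP HNB).
    have [j Hj] := block_in_leg HP Hm HBP HN.
    by rewrite (bigD1 j) //= Hj.
  rewrite exchange_big /=; apply: leq_sum => j _.
  rewrite -sum1_card [X in (_ <= X)%N]big_mkcond /= [X in (X <= _)%N]big_mkcond /=.
  apply: leq_sum => B _; rewrite !inE.
  by case: (B \subset leg j); case: (B \in P); case: (B != B0).
have Hlow2 : (q - 1 <= \sum_(j < d) (lam j %/ m))%N.
  apply: (leq_trans Hlow); apply: leq_sum => j _; rewrite leq_divRL //; exact: HQ.
nia.
Qed.
End Part.

Local Open Scope ring_scope.
Section Assemble.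
Variables (d : nat) (lam : 'I_d -> nat).
Local Notation V := (spider_vert lam).
Variables (p q : nat) (z : algC).
Hypothesis Hz : ((p.+1).-primitive_root z)%R.
Hypothesis Hq : (0 < q)%N.
Hypothesis Hsum : (1 + \sum_(j < d) lam j = p.+1 * q)%N.
Hypothesis Hleg : (\sum_(j < d) (lam j %/ p.+1) = q - 1)%N.

Lemma psi_chrom :
  psi p z (chrom_sym (@spider_adj d lam)) = (-1) ^+ q * (p.+1)%:R * (p%:R) ^+ (q - 1).
Proof.
have HV : #|V| = (p.+1 * q)%N by rewrite card_V.
have HpN : (p.+1 <= #|V|)%N by rewrite HV; nia.
rewrite /chrom_sym /psi rmorph_sum /=.
under eq_bigr do rewrite rmorph_prod /=.
under eq_bigr do under eq_bigr do rewrite mmapX mmap1U.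
rewrite (@sum_widen d lam _ p z HpN).
under eq_bigr do rewrite prodrN.
rewrite -mulr_sumr sum_col // prod_eval //; last by rewrite HV dvdn_mulr.
rewrite Hleg.
have -> : #|[pred _ : V | true]| = #|V| by apply: eq_card.
rewrite HV.
have Hs : (\sum_(j < d) (lam j - lam j %/ p.+1) = p.+1 * q - 1 - (q - 1))%N.
  have : (\sum_(j < d) (lam j - lam j %/ p.+1) + \sum_(j < d) (lam j %/ p.+1)
          = \sum_(j < d) lam j)%N.
    rewrite -big_split /=; apply: eq_bigr => j _; rewrite subnK //; exact: leq_div.
  lia.
have Hsign : (-1) ^+ (p.+1 * q) * (-1) ^+ (p.+1 * q - 1 - (q - 1)) = (-1) ^+ q :> algC.
  rewrite -exprD -signr_odd.
  have -> : (p.+1 * q + (p.+1 * q - 1 - (q - 1)) = (p * q).*2 + q)%N.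
    rewrite -addnn; nia.
  by rewrite oddD odd_double /= signr_odd.
rewrite Hs -Hsign; ring.
Qed.

End Assemble.

Local Open Scope ring_scope.
Section Uniq.
Variables (N p q : nat) (z : algC).
Hypothesis Hz : ((p.+1).-primitive_root z)%R.
Hypothesis Hq : (0 < q)%N.
Hypothesis HN : N = (p.+1 * q)%N.

Lemma HpN : (p.+1 <= N)%N. Proof. rewrite HN; nia. Qed.

Lemma psi_prod (I : finType) (F : I -> {mpoly int[N]}) :
  psi p z (\prod_i F i) = \prod_i psi p z (F i).
Proof. exact: rmorph_prod. Qed.

Lemma psi_sum (I : finType) (P : pred I) (F : I -> {mpoly int[N]}) :
  psi p z (\sum_(i | P i) F i) = \sum_(i | P i) psi p z (F i).
Proof. exact: rmorph_sum. Qed.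

Lemma psi_scale c (P : {mpoly int[N]}) : psi p z (c *: P) = c%:~R * psi p z P.
Proof. by rewrite /psi mmapZ. Qed.

Lemma psi_ebasis nu : is_ipart nu ->
  psi p z (e_basis nu) = if nu == part_mq N p.+1 q then (-1) ^+ q else 0.
Proof.
move=> Hnu; rewrite /e_basis psi_prod.
case: eqP => [->|Hne].
- rewrite (eq_bigr (fun i : 'I_N => if (i < q)%N then -1 else 1)); last first.
    move=> i _; rewrite (psi_mesymE Hz HpN); last by rewrite -ltnS.
    by rewrite part_mq_val //; case: (i < q)%N; rewrite /= ?eqxx.
  rewrite -[LHS](big_mkcond (fun i : 'I_N => (i < q)%N)) /=.
  rewrite prodr_const card_ord_lt; congr (_ ^+ _).
  apply/minn_idPl; rewrite HN; nia.
- have [i Hi] : exists i, ~~ ((nu i == 0 :> nat) || (nu i == p.+1 :> nat)).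
    apply/existsP; rewrite -negb_forall; apply/negP => /forallP H; apply: Hne.
    exact: ipart_01.
  rewrite (bigD1 i) //= (psi_mesymE Hz HpN); last by rewrite -ltnS.
  move: Hi; rewrite negb_or => /andP[/negbTE -> /negbTE ->].
  by rewrite mul0r.
Qed.

Lemma coeff_unique (X : {mpoly int[N]}) (a : {ffun 'I_N -> 'I_N.+1} -> int) :
  psi p z X = (-1) ^+ q * (p.+1)%:R * (p%:R) ^+ (q - 1) ->
  X = \sum_(nu | is_ipart nu) a nu *: e_basis nu ->
  a (part_mq N p.+1 q) = (p.+1 * p ^ (q - 1))%N%:Z.
Proof.
move=> HX EX; move: HX; rewrite EX psi_sum.
under eq_bigr => nu Hnu do rewrite psi_scale (psi_ebasis Hnu).
rewrite (bigD1 (part_mq N p.+1 q)) /=; last exact: ipart_mq.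
rewrite eqxx big1 ?addr0; last by move=> nu /andP[_ /negbTE ->]; rewrite mulr0.
move=> H.
have H2 : (a (part_mq N p.+1 q))%:~R = ((p.+1 * p ^ (q - 1))%N%:Z)%:~R :> algC.
  have Hs : ((-1) ^+ q != 0 :> algC) by rewrite signr_eq0.
  apply: (mulIf Hs); rewrite H /=.
  have -> : (((p.+1 * p ^ (q - 1))%N%:Z)%:~R : algC) = (p.+1 * p ^ (q - 1))%N%:R by [].
  rewrite natrM natrX; ring.
apply/eqP; rewrite -subr_eq0 -(intr_eq0 algC) rmorphB /= H2 subrr //.
Qed.

End Uniq.

Section Sort.
Variable N : nat.

Definition sq (mo : 'X_{1..N}) : seq nat :=
  sort geq (flatten [seq nseq (mo i) i.+1 | i <- enum 'I_N]).

Definition nuof (mo : 'X_{1..N}) : {ffun 'I_N -> 'I_N.+1} :=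
  [ffun i : 'I_N => inord (nth 0 (sq mo) i)].

Lemma sq_perm mo : perm_eq (sq mo) (flatten [seq nseq (mo i) i.+1 | i <- enum 'I_N]).
Proof. by rewrite /sq perm_sort. Qed.

Lemma sq_mem mo x : x \in sq mo -> (0 < x <= N)%N.
Proof.
rewrite (perm_mem (sq_perm mo)) => /flattenP [s /mapP [i _ ->]].
by move/nseqP => [-> _]; rewrite ltn_ord.
Qed.

Lemma sumn_sq mo : sumn (sq mo) = mnmwgt mo.
Proof.
rewrite (perm_sumn (sq_perm mo)) sumn_flatten -map_comp /mnmwgt sumnE big_map big_enum /=.
by apply: eq_bigr => i _; rewrite sumn_nseq mulnC.
Qed.

Lemma size_le_sumn (s : seq nat) : all (fun x => 0 < x)%N s -> (size s <= sumn s)%N.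
Proof. elim: s => //= x s IH /andP[Hx Hs]; have := IH Hs; lia. Qed.

Lemma size_sq mo : mnmwgt mo = N -> (size (sq mo) <= N)%N.
Proof.
move=> Hw; rewrite -Hw -sumn_sq; apply: size_le_sumn.
by apply/allP => x /sq_mem /andP[].
Qed.

Lemma nth_sq_le mo i : (nth 0 (sq mo) i <= N)%N.
Proof.
case: (ltnP i (size (sq mo))) => Hi; last by rewrite nth_default.
by have /andP[] := sq_mem (mem_nth 0 Hi).
Qed.

Lemma nuof_val mo i : nat_of_ord (nuof mo i) = nth 0 (sq mo) i.
Proof. by rewrite ffunE /= inordK // ltnS nth_sq_le. Qed.

Lemma big_nth_N (R : Type) (idx : R) (op : Monoid.com_law idx) (F : nat -> R) (s : seq nat) :
  (size s <= N)%N -> F 0 = idx ->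
  \big[op/idx]_(i < N) F (nth 0 s i) = \big[op/idx]_(x <- s) F x.
Proof.
move=> Hs HF0; rewrite (big_nth 0) big_mkord (big_ord_widen N (fun i => F (nth 0 s i)) Hs).
rewrite [RHS]big_mkcond /=; apply: eq_bigr => i _.
by case: ifP => // /negbT; rewrite -leqNgt => Hi; rewrite nth_default.
Qed.

Lemma nuof_ipart mo : mnmwgt mo = N -> is_ipart (nuof mo).
Proof.
move=> Hw; apply/andP; split.
- apply/forallP => i; apply/forallP => j; apply/implyP => Hij.
  rewrite !nuof_val.
  case: (ltnP j (size (sq mo))) => Hj; last by rewrite (nth_default _ Hj).
  have Hsort : sorted geq (sq mo) by apply: sort_sorted => x y; exact: leq_total.
  have Htr : transitive geq by move=> x y w /= H1 H2; apply: leq_trans H2 H1.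
  apply: (sorted_leq_nth Htr (fun x => leqnn x) 0 Hsort) => //; rewrite inE; lia.
- under eq_bigr do rewrite nuof_val.
  rewrite (@big_nth_N _ _ (Monoid.Law.clone _ _ addn _) (fun x => x)) ?size_sq //.
  by rewrite -sumnE sumn_sq Hw.
Qed.

End Sort.

Local Open Scope ring_scope.
Section Exist.
Variables (V : finType) (adj : rel V).
Local Notation N := #|V|.

Lemma ebasis_nuof (mo : 'X_{1..N}) : mnmwgt mo = N ->
  e_basis (nuof mo) = \prod_(i < N) mesym N int i.+1 ^+ mo i.
Proof.
move=> Hw; rewrite /e_basis.
under eq_bigr do rewrite nuof_val.
rewrite (@big_nth_N _ _ _ (Monoid.ComLaw.clone _ _ *%R _) (fun x => mesym N int x)) /=;
  last by rewrite mesym0E.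
- rewrite (perm_big _ (sq_perm mo)) big_flatten big_map big_enum /=.
  by apply: eq_bigr => i _; rewrite big_nseq iter_mulr mulr1.
- exact: size_sq.
Qed.

Lemma chrom_sym_sym : chrom_sym adj \is symmetric.
Proof.
apply/issymP => s; rewrite /chrom_sym rmorph_sum /=.
under eq_bigr do rewrite rmorph_prod /=.
under eq_bigr do under eq_bigr do rewrite /msym mmapX mmap1U.
pose h (k : {ffun V -> 'I_N}) := [ffun v => s (k v)].
have hinj : injective h.
  move=> k1 k2 E; apply/ffunP => v.
  have := congr1 (fun f : {ffun V -> 'I_N} => f v) E; rewrite !ffunE; exact: perm_inj.
rewrite [RHS](reindex_inj hinj) /=; apply: eq_big => k.
- apply/forallP/forallP => H x; apply/forallP => y; have := H x => /forallP /(_ y);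
    by rewrite !ffunE (inj_eq perm_inj).
- by move=> _; apply: eq_bigr => v _; rewrite ffunE.
Qed.

Lemma prod_homog (I : finType) (F : I -> {mpoly int[N]}) :
  (forall i, F i \is 1.-homog) -> \prod_i F i \is #|I|.-homog.
Proof.
move=> HF; have -> : \prod_i F i = \prod_(i <- enum I) F i by rewrite big_enum.
rewrite [#|I|]cardE.
elim: (enum I) => [|i r IH]; first by rewrite big_nil dhomog1.
rewrite big_cons /=; exact: (dhomogM (HF i) IH).
Qed.

Lemma chrom_homog : chrom_sym adj \is N.-homog.
Proof.
apply: rpred_sum => k _; apply: prod_homog => v.
rewrite dhomogX; apply/eqP; exact: mdeg1.
Qed.

Lemma existence : exists a : {ffun 'I_N -> 'I_N.+1} -> int,
  chrom_sym adj = \sum_(nu | is_ipart nu) a nu *: e_basis nu.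
Proof.
have [t [Ht Hw]] := sym_fundamental_homog chrom_sym_sym chrom_homog.
move/dhomogP: Hw => Hw.
exists (fun nu => \sum_(mo <- msupp t | nuof mo == nu) t@_mo).
rewrite -Ht comp_mpolyEX big_seq_cond.
rewrite (partition_big (@nuof N) (@is_ipart N)) /=; last first.
  by move=> mo /andP[Hmo _]; apply: nuof_ipart; exact: Hw.
apply: eq_bigr => nu Hnu; rewrite scaler_suml [RHS]big_seq_cond.
apply: eq_big => mo; first by rewrite andbT.
move=> /andP[/andP[Hmo _] /eqP <-]; congr (_ *: _).
rewrite comp_mpolyX ebasis_nuof; last exact: Hw.
by apply: eq_bigr => i _; rewrite tnth_mktuple.
Qed.

End Exist.

Close Scope ring_scope.

Theorem lemma5p1 (d : nat) (lam : 'I_d -> nat) (m q : nat) :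
  (forall j, 0 < lam j)%N ->
  (0 < q)%N -> (1 < m)%N ->
  (1 + \sum_(j < d) lam j = m * q)%N ->
  (exists P : {set {set spider_vert lam}},
      connected_partition_of_type_mq (@spider_adj d lam) m q P) ->
  e_coeff_is (chrom_sym (@spider_adj d lam)) (part_mq #|spider_vert lam| m q)
    ((m * (m - 1) ^ (q - 1))%N%:Z).
Proof.
move=> Hlam Hq Hm Hsum [P HP].
case: m Hm Hsum HP => // p Hm Hsum HP.
rewrite subSS subn0.
have [z Hz] := C_prim_root_exists (ltn0Sn p).
have Hleg := legs_div HP (ltn0Sn p) Hsum.
have HN : #|spider_vert lam| = (p.+1 * q)%N by rewrite card_V.
split.
- exact: existence.
- move=> a Ha.
  exact: (coeff_unique Hz Hq HN (psi_chrom Hz Hq Hsum Hleg) Ha).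
Qed.
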